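(* Let $p$ be an odd prime, $K$ an algebraically closed field of characteristic $\ne p$, and $n=p^st$ with $\gcd(p,t)=1$ and $s,t\ge1$. Every toral elementary abelian $p$-subgroup of $\mathrm{PGL}_n(K)$ with disconnected centralizer in $\mathrm{PGL}_n(K)$ is conjugate to a subgroup of the form $D_r\times(H\otimes I_{p^r})$, where $1\le r\le s$, $n=p^rk$, and $H$ is either trivial or a toral elementary abelian $p$-subgroup of $\mathrm{PGL}_k(K)$ with $C_{\mathrm{PGL}_k(K)}(H)$ connected.
   Context: Toral: contained in a maximal torus. Fix a primitive $p$-th root of unity $\beta\in K$. For $r\ge1$, $0\le s'\le r-1$, $A_{s'}$ is the $p^r\times p^r$ diagonal matrix with $(A_{s'})_{ii}=\beta^{\lfloor(i-1)/p^{s'}\rfloor}$ and $\bar A_{s'}$ the image in $\mathrm{PGL}_n(K)$ of $I_k\otimes A_{s'}$ (block diagonal, $k$ copies), $n=p^rk$. $D_r=\langle\bar A_0,\dots,\bar A_{r-1}\rangle$. For $H\le\mathrm{PGL}_k(K)$, $H\otimes I_{p^r}$ is the image of $\{h\otimes I_{p^r}\}$ (each entry $h_{ab}$ replaced by $h_{ab}I_{p^r}$). *)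

(* Defs.v *)
From HB Require Import structures.
From mathcomp Require Import all_boot all_order all_algebra.
Set Implicit Arguments.
Unset Strict Implicit.
Unset Printing Implicit Defensive.
Import Order.TTheory GRing.Theory Num.Theory.
Local Open Scope ring_scope.

(* Conventions: a subgroup G of PGL_m(K) is represented by its full preimage
   in GL_m(K), a predicate on 'M[K]_m (saturated under nonzero scalars). *)

Section PGL.
Variable K : fieldType.

Definition proj_eq m (A B : 'M[K]_m) : Prop := exists2 c : K, c != 0 & A = c *: B.

Definition pgl_subgroup m (S : 'M[K]_m -> Prop) : Prop :=
  [/\ (forall A, S A -> A \in unitmx),
      (forall c : K, c != 0 -> S (c%:M)),
      (forall A B, S A -> S B -> S (A *m B)) &
      (forall A, S A -> S (invmx A))].

(* the image in PGL_m(K) is a finite elementary abelian p-group *)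
Definition pgl_elem_abelian (p : nat) m (S : 'M[K]_m -> Prop) : Prop :=
  [/\ pgl_subgroup S,
      (exists s : seq 'M[K]_m, forall A, S A -> exists2 B, B \in s & proj_eq A B),
      (forall A B, S A -> S B -> proj_eq (A *m B) (B *m A)) &
      (forall A, S A -> exists c : K, A ^+ p = c%:M)].

(* toral: contained in a maximal torus of PGL_m(K), i.e. in a conjugate
   g^-1 T g of the image T of the invertible diagonal matrices. *)
Definition pgl_toral m (S : 'M[K]_m -> Prop) : Prop :=
  exists2 g : 'M[K]_m, g \in unitmx &
    forall A, S A -> is_diag_mx (g *m A *m invmx g).

Definition pgl_centralizer m (S : 'M[K]_m -> Prop) : 'M[K]_m -> Prop :=
  fun g => g \in unitmx /\
    forall A, S A -> proj_eq (g *m A *m invmx g) A.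

Inductive gl_regular m : ('M[K]_m -> K) -> Prop :=
| reg_const (c : K) : gl_regular (fun _ => c)
| reg_coord (i j : 'I_m) : gl_regular (fun A => A i j)
| reg_invdet : gl_regular (fun A => (\det A)^-1)
| reg_add f g : gl_regular f -> gl_regular g -> gl_regular (fun A => f A + g A)
| reg_mul f g : gl_regular f -> gl_regular g -> gl_regular (fun A => f A * g A).

Definition gl_closed m (Z : 'M[K]_m -> Prop) : Prop :=
  (forall A, Z A -> A \in unitmx) /\
  exists F : ('M[K]_m -> K) -> Prop,
    (forall f, F f -> gl_regular f) /\
    (forall A, A \in unitmx -> (Z A <-> forall f, F f -> f A = 0)).

(* Zariski closed subsets of PGL_m(K) (quotient topology), given by their
   (scalar-saturated) preimages in GL_m(K) *)
Definition pgl_closed m (Z : 'M[K]_m -> Prop) : Prop :=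
  gl_closed Z /\ forall A (c : K), Z A -> c != 0 -> Z (c *: A).

Definition pgl_connected m (X : 'M[K]_m -> Prop) : Prop :=
  ~ exists Z1 Z2 : 'M[K]_m -> Prop,
      [/\ pgl_closed Z1 /\ pgl_closed Z2,
          (forall A, X A -> Z1 A \/ Z2 A),
          (exists A, X A /\ Z1 A),
          (exists A, X A /\ Z2 A) &
          (forall A, ~ [/\ X A, Z1 A & Z2 A])].

Definition pgl_trivial m : 'M[K]_m -> Prop :=
  fun A => exists2 c : K, c != 0 & A = c%:M.

(* \bar A_{s'} in PGL_n(K), n = p^r k: image of I_k (x) A_{s'} *)
Definition Abar (beta : K) (p r s' n : nat) : 'M[K]_n :=
  \matrix_(i < n, j < n)
    (if i == j then beta ^+ (((i : nat) %% p ^ r) %/ p ^ s')%N else 0).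

Definition Dr (beta : K) (p r n : nat) : 'M[K]_n -> Prop :=
  fun M => exists c : K, exists e : 'I_r -> nat, c != 0 /\
    M = c *: \big[mulmx/1%:M]_(s' < r) (Abar beta p r s' n) ^+ (e s').

(* entry of h : 'M_k at nat indices (0 outside the range) *)
Definition mx_at k (h : 'M[K]_k) (a b : nat) : K :=
  match insub a, insub b with
  | Some a', Some b' => h a' b'
  | _, _ => 0
  end.

(* h (x) I_q in 'M_n (n = k q): entry h_ab replaced by h_ab I_q *)
Definition tens_id k (q n : nat) (h : 'M[K]_k) : 'M[K]_n :=
  \matrix_(i < n, j < n)
    (if ((i : nat) %% q == (j : nat) %% q)%N
     then mx_at h ((i : nat) %/ q)%N ((j : nat) %/ q)%N else 0).

Definition tens_group k (q n : nat) (H : 'M[K]_k -> Prop) : 'M[K]_n -> Prop :=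
  fun M => exists2 h, H h & M = tens_id q n h.

(* preimage of the subgroup generated by two commuting subgroups *)
Definition pgl_prod m (S T : 'M[K]_m -> Prop) : 'M[K]_m -> Prop :=
  fun M => exists A B, [/\ S A, T B & M = A *m B].

Definition pgl_conj m (S T : 'M[K]_m -> Prop) : Prop :=
  exists2 g : 'M[K]_m, g \in unitmx &
    forall M, S M <-> T (g *m M *m invmx g).

End PGL.

(* Main.v *)
Require Import Defs.
From HB Require Import structures.
From mathcomp Require Import all_boot all_order all_algebra.
From mathcomp Require Import all_fingroup ring.
From Stdlib Require Import Classical ClassicalEpsilon.
Set Implicit Arguments. Unset Strict Implicit. Unset Printing Implicit Defensive.
Import GRing.Theory.
Local Open Scope ring_scope.


Section Reg.
Variable K : closedFieldType.
Variable m : nat.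
Implicit Types A B : 'M[K]_m.

Definition LP A1 A2 : 'M[{poly K}]_m := map_mx polyC A1 + 'X *: map_mx polyC (A2 - A1).
Definition Lx A1 A2 (x : K) : 'M[K]_m := A1 + x *: (A2 - A1).
Definition dP A1 A2 : {poly K} := \det (LP A1 A2).

Lemma LP_eval A1 A2 x i j : (LP A1 A2 i j).[x] = Lx A1 A2 x i j.
Proof. by rewrite !mxE hornerD hornerM hornerX !hornerC mulrC. Qed.

Lemma dP_eval A1 A2 x : (dP A1 A2).[x] = \det (Lx A1 A2 x).
Proof.
have -> : Lx A1 A2 x = map_mx (horner_eval x) (LP A1 A2).
  by apply/matrixP => i j; rewrite [RHS]mxE /horner_eval LP_eval.
by rewrite det_map_mx.
Qed.

Lemma reg_line f : gl_regular f -> forall A1 A2, exists P : {poly K}, exists a : nat,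
  forall x, (dP A1 A2).[x] != 0 -> f (Lx A1 A2 x) = P.[x] / (dP A1 A2).[x] ^+ a.
Proof.
elim=> {f}.
- by move=> c A1 A2; exists c%:P, 0%N => x _; rewrite hornerC expr0 divr1.
- by move=> i j A1 A2; exists (LP A1 A2 i j), 0%N => x _; rewrite expr0 divr1 LP_eval.
- move=> A1 A2; exists 1, 1%N => x _; by rewrite hornerC expr1 dP_eval div1r.
- move=> f g _ IHf _ IHg A1 A2.
  have [P [a HP]] := IHf A1 A2; have [Q [b HQ]] := IHg A1 A2.
  exists (P * (dP A1 A2) ^+ b + Q * (dP A1 A2) ^+ a), (a + b)%N => x nz.
  rewrite HP // HQ // hornerD !hornerM !horner_exp exprD.
  have na : (dP A1 A2).[x] ^+ a != 0 by rewrite expf_neq0.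
  have nb : (dP A1 A2).[x] ^+ b != 0 by rewrite expf_neq0.
  by field; rewrite na nb.
- move=> f g _ IHf _ IHg A1 A2.
  have [P [a HP]] := IHf A1 A2; have [Q [b HQ]] := IHg A1 A2.
  exists (P * Q), (a + b)%N => x nz.
  rewrite HP // HQ // !hornerM exprD.
  have na : (dP A1 A2).[x] ^+ a != 0 by rewrite expf_neq0.
  have nb : (dP A1 A2).[x] ^+ b != 0 by rewrite expf_neq0.
  by field; rewrite na nb.
Qed.

Lemma poly_nonroot (q : {poly K}) : q != 0 -> exists x, q.[x] != 0.
Proof.
move=> nq; pose r := q * 'X + 1.
have : size r != 1%N.
  have sq : (0 < size q)%N by rewrite lt0n size_poly_eq0.
  by rewrite /r size_addl size_mulX // ?size_poly1 // eqSS -lt0n.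
move/closed_rootP=> [x]; rewrite /root /r hornerD hornerMX hornerC => /eqP h.
exists x; apply/eqP => q0; move: h; rewrite q0 mul0r add0r => /eqP.
by rewrite oner_eq0.
Qed.

Lemma poly_vanish (q : {poly K}) : (forall x, q.[x] = 0) -> q = 0.
Proof. move=> h; apply/eqP/negPn/negP => /poly_nonroot [x]; by rewrite h eqxx. Qed.

Lemma conn_affine (X : 'M[K]_m -> Prop) : (forall A, X A -> A \in unitmx) ->
  (forall A1 A2 x, X A1 -> X A2 -> Lx A1 A2 x \in unitmx -> X (Lx A1 A2 x)) ->
  pgl_connected X.
Proof.
move=> XU Xaff [Z1 [Z2 [[[c1 cl1] [c2 cl2]] cov [A1 [XA1 Z1A1]] [A2 [XA2 Z2A2]] dis]]].
case: c1 => _ [F1 [F1r F1e]]; case: c2 => _ [F2 [F2r F2e]].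
have nZ1 : ~ Z1 A2 by move=> h; apply: (dis A2).
have nZ2 : ~ Z2 A1 by move=> h; apply: (dis A1).
have [f [Ff fA2]] : exists f, F1 f /\ f A2 <> 0.
  apply: NNPP => H; apply: nZ1; apply/(F1e _ (XU _ XA2)) => f Ff.
  by apply: NNPP => h; apply: H; exists f.
have [g [Fg gA1]] : exists g, F2 g /\ g A1 <> 0.
  apply: NNPP => H; apply: nZ2; apply/(F2e _ (XU _ XA1)) => g Fg.
  by apply: NNPP => h; apply: H; exists g.
have [P [a HP]] := reg_line (F1r _ Ff) A1 A2.
have [Q [b HQ]] := reg_line (F2r _ Fg) A1 A2.
have L0 : Lx A1 A2 0 = A1 by rewrite /Lx scale0r addr0.
have L1 : Lx A1 A2 1 = A2 by rewrite /Lx scale1r addrC subrK.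
have d0 : (dP A1 A2).[0] != 0 by rewrite dP_eval L0 -unitfE -unitmxE XU.
have d1 : (dP A1 A2).[1] != 0 by rewrite dP_eval L1 -unitfE -unitmxE XU.
have : P * Q * dP A1 A2 = 0.
  apply: poly_vanish => x; rewrite !hornerM.
  have [->|nz] := eqVneq (dP A1 A2).[x] 0; first by rewrite mulr0.
  have Lu : Lx A1 A2 x \in unitmx by rewrite unitmxE unitfE -dP_eval.
  have nza : (dP A1 A2).[x] ^+ a != 0 by rewrite expf_neq0.
  have nzb : (dP A1 A2).[x] ^+ b != 0 by rewrite expf_neq0.
  case: (cov _ (Xaff _ _ _ XA1 XA2 Lu)) => hZ.
  - have := (proj1 (F1e _ Lu) hZ f Ff); rewrite HP // => /eqP.
    rewrite mulf_eq0 invr_eq0 (negPf nza) orbF => /eqP ->; by rewrite !mul0r.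
  - have := (proj1 (F2e _ Lu) hZ g Fg); rewrite HQ // => /eqP.
    rewrite mulf_eq0 invr_eq0 (negPf nzb) orbF => /eqP ->; by rewrite mulr0 mul0r.
move/eqP; rewrite !mulf_eq0 => /orP [/orP [] /eqP P0|/eqP d00].
- by apply: fA2; rewrite -L1 HP // P0 horner0 mul0r.
- by apply: gA1; rewrite -L0 HQ // P0 horner0 mul0r.
- by move: d0; rewrite d00 horner0 eqxx.
Qed.

End Reg.

Lemma conn_comm (K : closedFieldType) n (E : 'M[K]_n -> Prop) :
  (forall g A, pgl_centralizer E g -> E A -> g *m A = A *m g) ->
  pgl_connected (pgl_centralizer E).
Proof.
move=> hc; apply: conn_affine => [A [] //|A1 A2 x [u1 h1] [u2 h2] Lu]; split => // A EA.
have c1 := hc _ _ (conj u1 h1) EA; have c2 := hc _ _ (conj u2 h2) EA.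
have cL : Lx A1 A2 x *m A = A *m Lx A1 A2 x.
  by rewrite /Lx mulmxDl mulmxDr -scalemxAl -scalemxAr mulmxBl mulmxBr c1 c2.
exists 1; first exact: oner_neq0.
by rewrite scale1r cL mulmxK.
Qed.

Lemma disconn_witness (K : closedFieldType) n (E : 'M[K]_n -> Prop) :
  ~ pgl_connected (pgl_centralizer E) ->
  exists g A, [/\ pgl_centralizer E g, E A & g *m A <> A *m g].
Proof.
move=> nc; apply: NNPP => h; apply: nc; apply: conn_comm => g A cg EA.
apply: NNPP => ne; apply: h; by exists g, A.
Qed.


Section MxGen.
Variable K : fieldType.
Variable n : nat.
Implicit Types A B C M : 'M[K]_n.

Lemma invmx_uniq A B : A *m B = 1%:M -> invmx A = B.
Proof.
move=> AB; have [uA uB] := mulmx1_unit AB.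
by rewrite -[invmx A]mulmx1 -AB mulmxA mulVmx // mul1mx.
Qed.

Lemma invmxM A B : A \in unitmx -> B \in unitmx -> invmx (A *m B) = invmx B *m invmx A.
Proof.
move=> uA uB; apply: invmx_uniq.
by rewrite mulmxA -[A *m B *m _]mulmxA mulmxV // mulmx1 mulmxV.
Qed.

Lemma diag_mulE A B i : is_diag_mx A -> is_diag_mx B -> (A *m B) i i = A i i * B i i.
Proof.
move=> /diag_mxP [d ->] /diag_mxP [e ->].
by rewrite mulmx_diag !mxE !eqxx !mulr1n.
Qed.

Lemma diag_mul A B : is_diag_mx A -> is_diag_mx B -> is_diag_mx (A *m B).
Proof. move=> /diag_mxP [d ->] /diag_mxP [e ->]; by rewrite mulmx_diag diag_mx_is_diag. Qed.

Lemma diag_entry_nz A i : A \in unitmx -> is_diag_mx A -> A i i != 0.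
Proof.
move=> uA /diag_mxP [d dA]; move: uA; rewrite unitmxE unitfE dA det_diag.
rewrite (bigD1 i) //= mulf_eq0 negb_or => /andP [].
by rewrite mxE eqxx mulr1n.
Qed.

Definition dinv A : 'M[K]_n := diag_mx (\row_i (A i i)^-1).

Lemma diag_invE A : A \in unitmx -> is_diag_mx A -> invmx A = dinv A.
Proof.
move=> uA dA; apply: invmx_uniq; move/diag_mxP: (dA) => [d Ad].
apply/matrixP => i j; rewrite Ad mulmx_diag !mxE.
have := diag_entry_nz i uA dA; rewrite Ad mxE !eqxx !mulr1n => nz.
by rewrite mulfV.
Qed.

Lemma diag_inv A : A \in unitmx -> is_diag_mx A -> is_diag_mx (invmx A).
Proof. by move=> uA dA; rewrite diag_invE // diag_mx_is_diag. Qed.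

Lemma diag_invEE A i : A \in unitmx -> is_diag_mx A -> invmx A i i = (A i i)^-1.
Proof. by move=> uA dA; rewrite diag_invE // !mxE eqxx mulr1n. Qed.

Lemma diag_scalar (c : K) : is_diag_mx (c%:M : 'M[K]_n).
Proof.
apply/is_diag_mxP => i j ne; rewrite mxE; case: eqVneq => [eij|]; last by rewrite mulr0n.
by rewrite eij eqxx in ne.
Qed.

Lemma mxpowE A e : A ^+ e = iter e (mulmx A) 1%:M.
Proof. elim: e => [|e IH] //=; by rewrite exprS IH. Qed.

Lemma diag_pow A e : is_diag_mx A -> is_diag_mx (A ^+ e) /\ forall i, (A ^+ e) i i = A i i ^+ e.
Proof.
move=> dA; elim: e => [|e [IH1 IH2]].
  by split; [rewrite expr0 -idmxE diag_scalar | move=> i; rewrite expr0 -idmxE mxE eqxx].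
split; first by rewrite exprS -mulmxE diag_mul.
by move=> i; rewrite exprS -mulmxE diag_mulE // IH2 exprS.
Qed.

Lemma mx0_all (A B : 'M[K]_0) : A = B.
Proof. by apply/matrixP => [[]]. Qed.

End MxGen.

Section MxGen2.
Variable K : fieldType.
Variable n : nat.
Implicit Types A B C M X : 'M[K]_n.

Lemma mulmx_diagr X M i j : is_diag_mx M -> (X *m M) i j = X i j * M j j.
Proof. move=> /diag_mxP [d ->]; by rewrite mul_mx_diag !mxE eqxx mulr1n. Qed.

Lemma mulmx_diagl X M i j : is_diag_mx M -> (M *m X) i j = M i i * X i j.
Proof. move=> /diag_mxP [d ->]; by rewrite mul_diag_mx !mxE eqxx mulr1n. Qed.

Lemma diag_offE M i j : is_diag_mx M -> i != j -> M i j = 0.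
Proof. move=> /is_diag_mxP h ne; apply: h; by rewrite val_eqE. Qed.

Lemma perm_mx_inv (s : 'S_n) : invmx (perm_mx s : 'M[K]_n) = perm_mx s^-1.
Proof. by apply: invmx_uniq; rewrite -perm_mxM mulgV perm_mx1. Qed.

Lemma perm_conjE (s : 'S_n) M i j :
  (perm_mx s *m M *m invmx (perm_mx s : 'M[K]_n)) i j = M (s i) (s j).
Proof. by rewrite perm_mx_inv -row_permE -col_permE !mxE. Qed.

Lemma conj_inj (Q : 'M[K]_n) X Y : Q \in unitmx ->
  Q *m X *m invmx Q = Q *m Y *m invmx Q -> X = Y.
Proof.
move=> uQ h; have := congr1 (fun Z => invmx Q *m Z *m Q) h.
by rewrite /= !mulmxA !mulVmx // !mul1mx !mulmxKV.
Qed.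

End MxGen2.


Lemma mx_atE (K : fieldType) k (h : 'M[K]_k) (a b : 'I_k) : mx_at h a b = h a b.
Proof. by rewrite /mx_at !valK. Qed.

Lemma AbarE (K : fieldType) (beta : K) p r s' n (i j : 'I_n) :
  Abar beta p r s' n i j = (i == j)%:R * beta ^+ ((i %% p ^ r) %/ p ^ s').
Proof. by rewrite mxE; case: eqVneq => [->|_]; rewrite ?mul1r ?mul0r. Qed.

Lemma Abar_diag (K : fieldType) (beta : K) p r s' n : is_diag_mx (Abar beta p r s' n).
Proof. apply/is_diag_mxP => i j ne; rewrite mxE; case: eqVneq => // eij; by rewrite eij eqxx in ne. Qed.

Lemma scale_diag (K : fieldType) n (c : K) (M : 'M[K]_n) : is_diag_mx M -> is_diag_mx (c *: M).
Proof. move=> /is_diag_mxP h; apply/is_diag_mxP => i j ne; by rewrite mxE h // mulr0. Qed.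

Section Peel.
Variable K : fieldType.
Variables (p : nat) (beta : K).
Hypothesis pp : prime p.
Hypothesis bprim : p.-primitive_root beta.
Variable n : nat.
Variable E : 'M[K]_n -> Prop.
Hypothesis Eab : pgl_elem_abelian p E.
Hypothesis Ediag : forall M, E M -> is_diag_mx M.
Variables g A : 'M[K]_n.
Hypothesis Cg : pgl_centralizer E g.
Hypothesis EA : E A.
Hypothesis ncomm : g *m A <> A *m g.

Lemma EU M : E M -> M \in unitmx. Proof. by case: Eab => [[U S Mu I] _ _ _]; apply: U. Qed.
Lemma Esc c : c != 0 -> E c%:M. Proof. by case: Eab => [[U S Mu I] _ _ _]; apply: S. Qed.
Lemma Emul M N : E M -> E N -> E (M *m N). Proof. by case: Eab => [[U S Mu I] _ _ _]; apply: Mu. Qed.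
Lemma Einv M : E M -> E (invmx M). Proof. by case: Eab => [[U S Mu I] _ _ _]; apply: I. Qed.
Lemma Epow M : E M -> exists c : K, M ^+ p = c%:M. Proof. by case: Eab => _ _ _ P; apply: P. Qed.
Lemma EX M e : E M -> E (M ^+ e).
Proof.
move=> EM; elim: e => [|e IH]; first by rewrite expr0 -idmxE; apply: Esc; exact: oner_neq0.
by rewrite exprS -mulmxE; apply: Emul.
Qed.

Lemma p_gt0 : (0 < p)%N. Proof. exact: prime_gt0. Qed.

Lemma n_gt0 : (0 < n)%N.
Proof.
case: (posnP n) => // n0; exfalso; apply: ncomm.
apply/matrixP => i; have := ltn_ord i; rewrite {2}n0 //.
Qed.

Definition i0 : 'I_n := Ordinal n_gt0.

Lemma exists_perm : exists s : 'S_n, [forall i, g i (s i) != 0].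
Proof.
apply: NNPP => H.
have : \det g = 0.
  rewrite /determinant big1 // => s _.
  have [i gi] : exists i, g i (s i) = 0.
    apply: NNPP => H2; apply: H; exists s; apply/forallP => i.
    by apply/eqP => h; apply: H2; exists i.
  by rewrite (bigD1 i) //= gi mul0r mulr0.
move/eqP; apply/negP; rewrite -unitfE -unitmxE; by case: Cg.
Qed.

Definition sig : 'S_n := xchoose exists_perm.
Lemma sigP i : g i (sig i) != 0.
Proof. by have /forallP := xchooseP exists_perm. Qed.

Definition Wt c (M : 'M[K]_n) := forall i, M (sig i) (sig i) = c * M i i.

Lemma weight0 M : E M -> exists2 c, g *m M *m invmx g = c *: M & Wt c M.
Proof.
move=> EM; case: Cg => ug /(_ M EM) [c nc hc]; exists c => // i.
have h : g *m M = c *: (M *m g).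
  by rewrite scalemxAl -hc mulmxKV.
have := congr1 (fun Z : 'M[K]_n => Z i (sig i)) h; rewrite /= mulmx_diagr ?Ediag // [in RHS]mxE.
by rewrite mulmx_diagl ?Ediag // mulrA [g i _ * _]mulrC => /(mulIf (sigP i)).
Qed.

Lemma WtX c M x i : Wt c M -> M ((sig ^+ x)%g i) ((sig ^+ x)%g i) = c ^+ x * M i i.
Proof.
move=> W; elim: x => [|x IH]; first by rewrite expg0 perm1 expr0 mul1r.
by rewrite expgSr permM W IH exprS mulrA [c * _]mulrC.
Qed.

Lemma Wt_mul c d M N : is_diag_mx M -> is_diag_mx N -> Wt c M -> Wt d N -> Wt (c * d) (M *m N).
Proof.
move=> dM dN WM WN i; rewrite !diag_mulE // WM WN.
by rewrite mulrACA.
Qed.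

Lemma Wt_pow c M e : is_diag_mx M -> Wt c M -> Wt (c ^+ e) (M ^+ e).
Proof.
move=> dM WM i; have [_ h] := diag_pow e dM; by rewrite !h WM exprMn.
Qed.

Lemma Wt_inv c M : M \in unitmx -> is_diag_mx M -> Wt c M -> Wt c^-1 (invmx M).
Proof.
move=> uM dM WM i; by rewrite !diag_invEE // WM invfM.
Qed.

Lemma Wt_scal c : Wt 1 (c%:M).
Proof. by move=> i; rewrite !mxE !eqxx mul1r. Qed.

Lemma entry_nz M i : E M -> M i i != 0.
Proof. move=> EM; apply: diag_entry_nz; [exact: EU | exact: Ediag]. Qed.

Lemma weight M : E M -> exists e : nat, g *m M *m invmx g = beta ^+ e *: M /\ Wt (beta ^+ e) M.
Proof.
move=> EM; have [c hc W] := weight0 EM.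
have [s hs] := Epow EM.
have Wp := Wt_pow p (Ediag EM) W.
have s0 : s != 0.
  have := entry_nz i0 (EX p EM); by rewrite hs mxE eqxx mulr1n.
have cp : c ^+ p = 1.
  have := Wp i0; rewrite hs !mxE !eqxx !mulr1n => /esym.
  by rewrite -{2}[s]mul1r => /(mulIf s0).
have [e he] := prim_rootP bprim cp.
exists e; by rewrite -he.
Qed.

Lemma cA_exists : exists2 j : nat, (0 < j < p)%N & g *m A *m invmx g = beta ^+ j *: A /\ Wt (beta ^+ j) A.
Proof.
have [e [he W]] := weight EA.
exists (e %% p)%N.
  rewrite ltn_mod p_gt0 andbT lt0n; apply/negP => /eqP e0.
  apply: ncomm; move: he; rewrite -(expr_mod _ (prim_expr_order bprim)) e0 expr0 scale1r.
  by move=> h; rewrite -(mulmxKV (proj1 Cg) (g *m A)) h.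
by rewrite expr_mod ?(prim_expr_order bprim).
Qed.

Lemma A0_ex : exists m : nat, Wt beta (A ^+ m).
Proof.
have [j /andP [j0 jp] [_ W]] := cA_exists.
have cop : coprime j p.
  rewrite coprime_sym prime_coprime //; apply/negP => /(dvdn_leq j0).
  by rewrite leqNgt jp.
have pc : p.-primitive_root (beta ^+ j) by rewrite prim_root_exp_coprime.
have [m hm] := prim_rootP pc (prim_expr_order bprim).
exists m; rewrite [in Wt beta _]hm; apply: Wt_pow => //; exact: Ediag.
Qed.

Definition A0 := A ^+ proj1_sig (constructive_indefinite_description _ A0_ex).
Lemma WA0 : Wt beta A0. Proof. exact: proj2_sig (constructive_indefinite_description _ A0_ex). Qed.
Lemma EA0 : E A0. Proof. exact: EX. Qed.
Lemma dA0 : is_diag_mx A0. Proof. exact: Ediag EA0. Qed.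

Definition c0 := A0 i0 i0.
Lemma c0_nz : c0 != 0. Proof. exact: entry_nz EA0. Qed.

Lemma A0_exp i : exists x : 'I_p, A0 i i = c0 * beta ^+ x.
Proof.
have [s hs] := Epow EA0.
have [_ hp] := diag_pow p dA0.
have e1 : forall j, A0 j j ^+ p = s by move=> j; rewrite -hp hs mxE eqxx mulr1n.
have : (A0 i i / c0) ^+ p = 1.
  have sn : s != 0 by rewrite -(e1 i0) expf_neq0 // c0_nz.
  by rewrite exprMn exprVn e1 /c0 e1 mulfV.
move/(prim_rootP bprim) => [x hx]; exists x.
by rewrite -hx mulrC divfK // c0_nz.
Qed.

Definition B := [set i | A0 i i == c0].
Definition k := #|B|.
Definition bb (a : nat) : 'I_n := nth i0 (enum B) a.

Lemma bb_in a : (a < k)%N -> bb a \in B.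
Proof. by move=> ak; rewrite /bb -mem_enum mem_nth // -cardE. Qed.

Lemma A0_bb a : (a < k)%N -> A0 (bb a) (bb a) = c0.
Proof. by move/bb_in; rewrite inE => /eqP. Qed.

Definition phi0 (x : nat) : 'I_n := (sig ^+ (x %% p))%g (bb (x %/ p)).

Lemma A0_phi x : (x %/ p < k)%N -> A0 (phi0 x) (phi0 x) = beta ^+ (x %% p) * c0.
Proof. by move=> xk; rewrite /phi0 (WtX _ _ WA0) A0_bb. Qed.

Lemma phi0_inj x1 x2 : (x1 %/ p < k)%N -> (x2 %/ p < k)%N -> phi0 x1 = phi0 x2 -> x1 = x2.
Proof.
move=> h1 h2 e.
have em : (x1 %% p = x2 %% p)%N.
  have := congr1 (fun i => A0 i i) e; rewrite /= !A0_phi // => /(mulIf c0_nz) /eqP.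
  by rewrite (eq_prim_root_expr bprim) !modn_mod => /eqP.
move: e; rewrite /phi0 em => /perm_inj.
rewrite /bb => /eqP; rewrite nth_uniq ?enum_uniq // -?cardE // => /eqP ed.
by rewrite (divn_eq x1 p) (divn_eq x2 p) ed em.
Qed.

Lemma beta_nz : beta != 0.
Proof. by rewrite (prim_root_eq0 bprim) -lt0n p_gt0. Qed.

Lemma phi0_surj j : exists2 x, (x %/ p < k)%N & phi0 x = j.
Proof.
have [y hy] := A0_exp j.
pose base := ((sig ^+ y)^-1)%g j.
have jb : (sig ^+ y)%g base = j by rewrite /base permKV.
have bB : base \in B.
  rewrite inE; have := WtX y base WA0; rewrite jb hy [c0 * _]mulrC.
  by move/(mulfI (expf_neq0 y beta_nz)) => ->.
have ik : (index base (enum B) < k)%N by rewrite /k cardE index_mem mem_enum.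
exists (index base (enum B) * p + y)%N.
  by rewrite divnMDl ?p_gt0 // divn_small // addn0.
rewrite /phi0 modnMDl modn_small // divnMDl ?p_gt0 // divn_small // addn0.
by rewrite /bb nth_index ?mem_enum.
Qed.

Lemma divk x : (x %/ p < k)%N = (x < k * p)%N.
Proof. by rewrite ltn_divLR // p_gt0. Qed.

Lemma nk : n = (k * p)%N.
Proof.
pose f (x : 'I_(k * p)) := phi0 x.
have finj : injective f.
  move=> x1 x2 /phi0_inj; rewrite !divk !ltn_ord => /(_ isT isT) h; exact: val_inj.
apply/eqP; rewrite eqn_leq; apply/andP; split.
  have -> : n = #|[set f x | x : 'I_(k * p)]|.
    rewrite -[LHS]card_ord; apply: eq_card => j; rewrite !inE; apply/esym/imsetP.
    have [x xk <-] := phi0_surj j; rewrite divk in xk.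
    by exists (Ordinal xk).
  by rewrite (leq_trans (leq_imset_card _ _)) // card_ord.
by have := leq_card f finj; rewrite !card_ord.
Qed.

Lemma ltk (i : 'I_n) : (i %/ p < k)%N.
Proof. by rewrite divk -nk ltn_ord. Qed.

Definition phif (i : 'I_n) : 'I_n := phi0 i.
Lemma phif_inj : injective phif.
Proof. by move=> x1 x2 /phi0_inj; rewrite !ltk => /(_ isT isT) h; exact: val_inj. Qed.

Definition phi : 'S_n := perm phif_inj.
Definition Q : 'M[K]_n := perm_mx phi.
Lemma Q_unit : Q \in unitmx. Proof. exact: unitmx_perm. Qed.

Lemma Qdiag X i j : is_diag_mx X ->
  (Q *m X *m invmx Q) i j = (i == j)%:R * X (phif i) (phif i).
Proof.
move=> dX; rewrite perm_conjE !permE.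
case: eqVneq => [->|ne]; first by rewrite mul1r.
rewrite mul0r diag_offE //; apply: contra ne => /eqP; by move/phif_inj => ->.
Qed.

Definition R (X : 'M[K]_n) : 'M[K]_k := diag_mx (\row_(a < k) X (bb a) (bb a)).

Lemma R_diag X : is_diag_mx (R X). Proof. exact: diag_mx_is_diag. Qed.

Lemma tensRE X (i j : 'I_n) :
  tens_id p n (R X) i j = (i == j)%:R * X (bb (i %/ p)) (bb (i %/ p)).
Proof.
rewrite mxE.
have -> : mx_at (R X) (i %/ p) (j %/ p) = mx_at (R X) (Ordinal (ltk i)) (Ordinal (ltk j)) by [].
rewrite mx_atE !mxE /=.
case: (eqVneq i j) => [->|ne]; first by rewrite !eqxx mulr1n mul1r.
rewrite mul0r; case: ifP => // /eqP em.
have ed : (i %/ p)%N != (j %/ p)%N.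
  apply: contra ne => /eqP ed; apply/eqP/val_inj.
  by rewrite /= (divn_eq i p) (divn_eq j p) ed em.
rewrite -val_eqE /= (negPf ed); by rewrite mulr0n.
Qed.

Lemma KEY X e : is_diag_mx X -> Wt 1 X ->
  Q *m (A0 ^+ e *m X) *m invmx Q = (c0 ^+ e *: Abar beta p 1 0 n ^+ e) *m tens_id p n (R X).
Proof.
move=> dX WX; have [dA0e hA0e] := diag_pow e dA0.
have [dAbe hAbe] := diag_pow e (Abar_diag beta p 1 0 n).
apply/matrixP => i j.
rewrite Qdiag ?diag_mul // mulmx_diagl ?scale_diag //.
rewrite tensRE diag_mulE // hA0e mxE hAbe AbarE eqxx mul1r expn1 expn0 divn1.
rewrite A0_phi ?ltk //.
have -> : X (phif i) (phif i) = X (bb (i %/ p)) (bb (i %/ p)).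
  by rewrite /phif /phi0 (WtX _ _ WX) expr1n mul1r.
case: eqVneq => _; last by rewrite !mul0r mulr0.
by rewrite !mul1r exprMn [c0 ^+ e * _]mulrC.
Qed.

Lemma R_mul X Y : is_diag_mx X -> is_diag_mx Y -> R (X *m Y) = R X *m R Y.
Proof.
move=> dX dY; rewrite /R mulmx_diag; congr diag_mx; apply/rowP => a.
by rewrite [in LHS]mxE diag_mulE // !mxE.
Qed.

Lemma R_scal c : R (c%:M) = c%:M.
Proof. apply/matrixP => a b; by rewrite !mxE eqxx mulr1n. Qed.

Lemma R_scale c X : R (c *: X) = c *: R X.
Proof. apply/matrixP => a b; by rewrite !mxE mulrnAr. Qed.

Lemma R_inv X : X \in unitmx -> is_diag_mx X -> invmx (R X) = R (invmx X).
Proof.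
move=> uX dX; apply: invmx_uniq; rewrite -R_mul ?diag_inv // mulmxV //.
exact: R_scal.
Qed.

Lemma R_pow X e : is_diag_mx X -> R (X ^+ e) = R X ^+ e.
Proof.
move=> dX; elim: e => [|e IH]; first by rewrite !expr0 -!idmxE R_scal.
rewrite exprS -mulmxE R_mul ?IH //; last by case: (diag_pow e dX).
by rewrite exprS mulmxE.
Qed.

Definition Hk (h : 'M[K]_k) : Prop := exists X, [/\ E X, Wt 1 X & h = R X].

Lemma Hk_diag h : Hk h -> is_diag_mx h.
Proof. by move=> [X [_ _ ->]]; exact: R_diag. Qed.

Lemma Hk_elem : pgl_elem_abelian p Hk.
Proof.
have Rsub : pgl_subgroup Hk.
  split.
  - move=> h [X [EX WX ->]]; have uX := EU EX; have dX := Ediag EX.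
    case: (@mulmx1_unit _ _ (R X) (R (invmx X))) => //.
    by rewrite -R_mul ?diag_inv // mulmxV // R_scal.
  - move=> c nc; exists c%:M; split; [exact: Esc | exact: Wt_scal | by rewrite R_scal].
  - move=> h1 h2 [X [EX WX ->]] [Y [EY WY ->]]; exists (X *m Y); split.
    + exact: Emul.
    + by have := Wt_mul (Ediag EX) (Ediag EY) WX WY; rewrite mulr1.
    + by rewrite R_mul ?Ediag.
  - move=> h [X [EX WX ->]]; exists (invmx X); split.
    + exact: Einv.
    + by have := Wt_inv (EU EX) (Ediag EX) WX; rewrite invr1.
    + by rewrite R_inv ?EU ?Ediag.
split => //.
- case: Eab => _ [sl hsl] _ _; exists (map R sl) => h [X [EX WX ->]].
  have [Bm Bin [c nc hc]] := hsl X EX.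
  exists (R Bm); first exact: map_f.
  by exists c => //; rewrite hc R_scale.
- move=> h1 h2 /Hk_diag /diag_mxP [d ->] /Hk_diag /diag_mxP [d' ->].
  exists 1; first exact: oner_neq0.
  rewrite scale1r !mulmx_diag; congr diag_mx; apply/rowP => a; by rewrite !mxE mulrC.
- move=> h [X [EX WX ->]]; have [c hc] := Epow EX.
  by exists c; rewrite -R_pow ?Ediag // hc R_scal.
Qed.

Lemma Hk_toral : pgl_toral Hk.
Proof.
exists 1%:M; first exact: unitmx1.
by move=> h /Hk_diag dh; rewrite mul1mx invmx1 mulmx1.
Qed.

Lemma peel_equiv M : E M <->
  pgl_prod (@Dr K beta p 1 n) (@tens_group K k p n Hk) (Q *m M *m invmx Q).
Proof.
split.
- move=> EM; have [e [_ WM]] := weight EM.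
  pose X := invmx (A0 ^+ e) *m M.
  have EAe : E (A0 ^+ e) by apply: EX; exact: EA0.
  have EXX : E X by apply: Emul => //; exact: Einv.
  have WX : Wt 1 X.
    have := Wt_mul (diag_inv (EU EAe) (Ediag EAe)) (Ediag EM)
      (Wt_inv (EU EAe) (Ediag EAe) (Wt_pow e dA0 WA0)) WM.
    by rewrite mulVf // expf_neq0 // beta_nz.
  have -> : M = A0 ^+ e *m X by rewrite /X mulKVmx // EU.
  rewrite KEY ?Ediag //.
  exists (c0 ^+ e *: Abar beta p 1 0 n ^+ e), (tens_id p n (R X)); split => //.
    exists (c0 ^+ e), (fun _ => e); split; first by rewrite expf_neq0 // c0_nz.
    by rewrite big_ord_recl big_ord0 mulmx1.
  by exists (R X) => //; exists X.
- move=> [D [T [[c [ef [cn ->]]] [h [X [EXX WX ->]] ->] hM]]].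
  rewrite big_ord_recl big_ord0 mulmx1 /= in hM.
  set e := ef ord0 in hM.
  pose Y := (c / c0 ^+ e) *: (A0 ^+ e *m X).
  have c0e : c0 ^+ e != 0 by rewrite expf_neq0 // c0_nz.
  have -> : M = Y.
    apply: (@conj_inj _ _ Q) => //; first exact: Q_unit.
    rewrite hM /Y -scalemxAr -!scalemxAl KEY ?Ediag // -scalemxAl scalerA divfK //.
  rewrite /Y -mul_scalar_mx; apply: Emul; last by apply: Emul => //; apply: EX; exact: EA0.
  by apply: Esc; rewrite mulf_neq0 // invr_eq0.
Qed.

Lemma peel_all : exists k (H : 'M[K]_k -> Prop) (Q : 'M[K]_n),
  [/\ n = (k * p)%N, Q \in unitmx, pgl_elem_abelian p H, (forall h, H h -> is_diag_mx h) &
      pgl_toral H /\ forall M, E M <-> pgl_prod (@Dr K beta p 1 n) (@tens_group K k p n H) (Q *m M *m invmx Q)].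
Proof.
exists k, Hk, Q; split.
- exact: nk.
- exact: Q_unit.
- exact: Hk_elem.
- exact: Hk_diag.
- split; [exact: Hk_toral | exact: peel_equiv].
Qed.

End Peel.


Section Tens.
Variable K : fieldType.
Variables (p k n : nat).
Hypothesis p0 : (0 < p)%N.
Hypothesis nk : n = (k * p)%N.

Lemma tdivlt (i : 'I_n) : (i %/ p < k)%N.
Proof. by rewrite ltn_divLR // -nk. Qed.

Lemma mx_atO (h : 'M[K]_k) a b (ha : (a < k)%N) (hb : (b < k)%N) :
  mx_at h a b = h (Ordinal ha) (Ordinal hb).
Proof. by rewrite /mx_at !insubT. Qed.

Lemma sum_n (G : nat -> K) : \sum_(l < n) G l = \sum_(0 <= a < k) \sum_(0 <= y < p) G (y + a * p)%N.
Proof.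
rewrite -(big_mkord xpredT G).
have -> : \sum_(0 <= l < n) G l = \sum_(0 <= l < k * p) G l.
  by move: (n) nk => m ->.
rewrite big_nat_mul; apply: eq_bigr => a _.
by rewrite -{1}[(a * p)%N]add0n big_addn mulSn addnK.
Qed.

Lemma tens_mul (X Y : 'M[K]_k) : tens_id p n (X *m Y) = tens_id p n X *m tens_id p n Y.
Proof.
apply/matrixP => i j; rewrite [RHS]mxE.
pose G (l : nat) := (if (i %% p == l %% p)%N then mx_at X (i %/ p) (l %/ p) else 0) *
   (if (l %% p == j %% p)%N then mx_at Y (l %/ p) (j %/ p) else 0).
rewrite (eq_bigr (fun l : 'I_n => G l)); last by move=> l _; rewrite !mxE.
rewrite sum_n mxE.
have -> : mx_at (X *m Y) (i %/ p) (j %/ p) =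
   \sum_(0 <= a < k) mx_at X (i %/ p) a * mx_at Y a (j %/ p).
  rewrite (mx_atO _ (tdivlt i) (tdivlt j)) mxE big_mkord.
  apply: eq_bigr => a _.
  case: a => a ha /=; by rewrite (mx_atO _ (tdivlt i) ha) (mx_atO _ ha (tdivlt j)).
have inner : forall a, \sum_(0 <= y < p) G (y + a * p)%N =
   (if (i %% p == j %% p)%N then mx_at X (i %/ p) a * mx_at Y a (j %/ p) else 0).
  move=> a0.
  rewrite (eq_big_nat _ _ (F2 := fun y => if y == (i %% p)%N then
      mx_at X (i %/ p) a0 * (if (i %% p == j %% p)%N then mx_at Y a0 (j %/ p) else 0) else 0)); last first.
    move=> y /andP [_ yp]; rewrite /G [(y + a0 * p)%N]addnC !modnMDl !(modn_small yp) divnMDl // (divn_small yp) addn0.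
    rewrite [(i %% p == y)%N]eq_sym; case: eqVneq => [->|_]; last by rewrite mul0r.
    by [].
  rewrite -big_mkcond big_nat1_eq /= ltn_mod p0.
  by case: ifP; rewrite ?mulr0.
rewrite (eq_bigr _ (fun a (_ : true) => inner a)).
case: ifP => _ //; by rewrite big1.
Qed.

Lemma ord_eq_split (i j : 'I_n) : (i == j) = ((i %% p == j %% p)%N && (i %/ p == j %/ p)%N).
Proof.
apply/eqP/andP => [->|[/eqP e1 /eqP e2]]; first by [].
by apply/val_inj; rewrite /= (divn_eq i p) (divn_eq j p) e1 e2.
Qed.

Lemma tensE (h : 'M[K]_k) (i j : 'I_n) :
  tens_id p n h i j = ((i %% p)%N == (j %% p)%N)%:R * h (Ordinal (tdivlt i)) (Ordinal (tdivlt j)).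
Proof. by rewrite mxE (mx_atO _ (tdivlt i) (tdivlt j)); case: ifP; rewrite ?mul1r ?mul0r. Qed.

Lemma tens_1 : tens_id p n (1%:M : 'M[K]_k) = 1%:M.
Proof.
apply/matrixP => i j; rewrite tensE !mxE ord_eq_split.
by rewrite -val_eqE /= -natrM mulnb.
Qed.

Lemma tens_scale c (X : 'M[K]_k) : tens_id p n (c *: X) = c *: tens_id p n X.
Proof. apply/matrixP => i j; by rewrite [LHS]tensE [in RHS]mxE tensE mxE mulrCA. Qed.

Lemma tens_scalar c : tens_id p n (c%:M : 'M[K]_k) = c%:M.
Proof. by rewrite -scalemx1 tens_scale tens_1 scalemx1. Qed.

Lemma tens_unit (X : 'M[K]_k) : X \in unitmx ->
  tens_id p n X \in unitmx /\ invmx (tens_id p n X) = tens_id p n (invmx X).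
Proof.
move=> uX; have e : tens_id p n X *m tens_id p n (invmx X) = 1%:M.
  by rewrite -tens_mul mulmxV // tens_1.
split; first by case: (mulmx1_unit e).
exact: invmx_uniq.
Qed.

Lemma tens_pow (X : 'M[K]_k) e : tens_id p n (X ^+ e) = tens_id p n X ^+ e.
Proof.
elim: e => [|e IH]; first by rewrite !expr0 -!idmxE tens_1.
by rewrite !exprS -!mulmxE tens_mul IH.
Qed.

Lemma tens_big r (F : 'I_r -> 'M[K]_k) :
  tens_id p n (\big[mulmx/1%:M]_(j < r) F j) = \big[mulmx/1%:M]_(j < r) tens_id p n (F j).
Proof.
elim: r F => [|r IH] F; first by rewrite !big_ord0 tens_1.
by rewrite !big_ord_recl tens_mul IH.
Qed.

Lemma tens_Abar (beta : K) r s' :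
  tens_id p n (Abar beta p r s' k) = Abar beta p r.+1 s'.+1 n.
Proof.
apply/matrixP => i j; rewrite tensE !AbarE ord_eq_split.
by rewrite -val_eqE /= expnSr expnS divnMA -modn_divl mulrA -natrM mulnb.
Qed.

Lemma Abar_lift (beta : K) r : p.-primitive_root beta ->
  Abar beta p 1 0 n = Abar beta p r.+1 0 n.
Proof.
move=> pb; apply/matrixP => i j; rewrite !AbarE !expn0 !divn1 expn1.
rewrite -[in RHS](expr_mod _ (prim_expr_order pb)) (modn_dvdm i (_ : (p %| p ^ r.+1)%N)) //.
by rewrite expnS dvdn_mulr.
Qed.

Lemma tens_Abar_comm (beta : K) (X : 'M[K]_k) : p.-primitive_root beta ->
  tens_id p n X *m Abar beta p 1 0 n = Abar beta p 1 0 n *m tens_id p n X.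
Proof.
move=> pb; apply/matrixP => i j; rewrite mulmx_diagr ?Abar_diag // mulmx_diagl ?Abar_diag //.
rewrite !tensE !AbarE !eqxx !mul1r expn1 expn0 !divn1.
case: eqVneq => [->|_]; last by rewrite !mul0r mulr0.
by rewrite mulrC.
Qed.

End Tens.

Lemma tens_tens (K : fieldType) p k n (p0 : (0 < p)%N) (nk : n = (k * p)%N) Q k' (h : 'M[K]_k') : (0 < Q)%N -> k = (k' * Q)%N ->
  tens_id p n (tens_id Q k h) = tens_id (Q * p) n h.
Proof.
move=> Q0 kk; apply/matrixP => i j.
rewrite mxE (mx_atO _ (tdivlt p0 nk i) (tdivlt p0 nk j)) (tensE Q0 kk) /=.
have ek (x : 'I_n) : (x %/ (Q * p) = x %/ p %/ Q)%N by rewrite mulnC divnMA.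
have em (x : 'I_n) : (x %% (Q * p) = x %% p + p * (x %/ p %% Q))%N.
  rewrite {1}(divn_eq (x %% (Q * p)) p) -modn_divl addnC; congr (_ + _)%N; last by rewrite mulnC.
  by rewrite (@modn_dvdm (Q * p)) // dvdn_mull.
rewrite !mxE !ek.
have -> : (i %% (Q * p) == j %% (Q * p))%N = ((i %% p == j %% p) && (i %/ p %% Q == j %/ p %% Q))%N.
  rewrite !em; apply/eqP/andP => [h1|[/eqP -> /eqP ->]] //.
  have h2 := congr1 (modn^~ p) h1; rewrite /= ![(_ %% p + _)%N]addnC ![(p * _)%N]mulnC !modnMDl !modn_mod in h2.
  split; apply/eqP => //.
  move: h1; rewrite h2 => /addnI /eqP; rewrite eqn_mul2l => /orP [/eqP p00|/eqP //].
  by rewrite p00 in p0.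
have -> : mx_at h (i %/ p %/ Q) (j %/ p %/ Q) = mx_at h (Ordinal (tdivlt p0 nk i) %/ Q) (Ordinal (tdivlt p0 nk j) %/ Q) by [].
rewrite (mx_atO _ (tdivlt Q0 kk (Ordinal (tdivlt p0 nk i))) (tdivlt Q0 kk (Ordinal (tdivlt p0 nk j)))).
case: ifP => /= _; last by []. by case: ifP; rewrite ?mul1r ?mul0r.
Qed.



Lemma comm_pow (K : fieldType) n (X Y : 'M[K]_n) e : X *m Y = Y *m X -> X *m Y ^+ e = Y ^+ e *m X.
Proof.
move=> c; elim: e => [|e IH]; first by rewrite expr0 -idmxE mulmx1 mul1mx.
by rewrite exprS -mulmxE mulmxA c -mulmxA IH mulmxA.
Qed.

Section Comp.
Variable K : fieldType.
Variables (p : nat) (beta : K).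
Hypothesis p0 : (0 < p)%N.
Hypothesis pb : p.-primitive_root beta.
Variables (n k r k' : nat).
Hypothesis nk : n = (k * p)%N.
Hypothesis kk : k = (k' * p ^ r)%N.

Local Notation T := (tens_id p n).

Lemma EQ c1 c (Ef : 'I_r.+1 -> nat) :
  (c1 *: Abar beta p 1 0 n ^+ Ef ord0) *m
    T (c *: \big[mulmx/1%:M]_(j < r) Abar beta p r j k ^+ Ef (lift ord0 j)) =
  (c1 * c) *: \big[mulmx/1%:M]_(s' < r.+1) Abar beta p r.+1 s' n ^+ Ef s'.
Proof.
rewrite (tens_scale p0 nk) (tens_big p0 nk) big_ord_recl.
rewrite -scalemxAl -scalemxAr scalerA (Abar_lift n r pb); congr (_ *: (_ *m _)).
apply: eq_bigr => j _; by rewrite (tens_pow p0 nk) (tens_Abar p0 nk) lift0.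
Qed.

Lemma D1_comm D1 (X : 'M[K]_k) : Dr beta p 1 D1 -> T X *m D1 = D1 *m T X.
Proof.
move=> [c [e [_ ->]]]; rewrite big_ord_recl big_ord0 mulmx1 /=.
rewrite -scalemxAl -scalemxAr; congr (_ *: _).
apply: comm_pow; exact: (tens_Abar_comm p0 nk).
Qed.

Lemma Dr1_form D1 : Dr beta p 1 D1 -> exists c e, c != 0 /\ D1 = c *: Abar beta p 1 0 n ^+ e.
Proof.
move=> [c [e [cn ->]]]; exists c, (e ord0); split => //.
by rewrite big_ord_recl big_ord0 mulmx1.
Qed.

Lemma tens_rp (h : 'M[K]_k') : T (tens_id (p ^ r) k h) = tens_id (p ^ r.+1) n h.
Proof. by rewrite (tens_tens p0 nk) ?expn_gt0 ?p0 // expnSr. Qed.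

Lemma compose (E : 'M[K]_n -> Prop) (H : 'M[K]_k -> Prop) (H' : 'M[K]_k' -> Prop)
  (Q : 'M[K]_n) (g' : 'M[K]_k) :
  Q \in unitmx -> g' \in unitmx ->
  (forall M, E M <-> pgl_prod (@Dr K beta p 1 n) (@tens_group K k p n H) (Q *m M *m invmx Q)) ->
  (forall h, H h <-> pgl_prod (@Dr K beta p r k) (@tens_group K k' (p ^ r) k H') (g' *m h *m invmx g')) ->
  pgl_conj E (pgl_prod (@Dr K beta p r.+1 n) (@tens_group K k' (p ^ r.+1) n H')).
Proof.
move=> uQ ug hE hH.
have [uT invT] := tens_unit p0 nk ug.
exists (T g' *m Q); first by rewrite unitmx_mul uT uQ.
move=> M; rewrite invmxM // hE.
have -> : T g' *m Q *m M *m (invmx Q *m invmx (T g')) = T g' *m (Q *m M *m invmx Q) *m invmx (T g').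
  by rewrite !mulmxA.
rewrite invT; set Z := Q *m M *m invmx Q.
split.
- move=> [D1 [Th [DD1 [h Hh ->] ->]]].
  have -> : T g' *m (D1 *m T h) *m T (invmx g') = D1 *m T (g' *m h *m invmx g').
    by rewrite !(tens_mul p0 nk) !mulmxA (D1_comm _ DD1).
  have [D' [Th' [[c [e' [cn ->]]] [h'' Hh'' ->] ->]]] := (proj1 (hH h) Hh).
  have [c1 [e1 [c1n ->]]] := Dr1_form DD1.
  rewrite (tens_mul p0 nk) mulmxA tens_rp.
  pose Ef (s : 'I_r.+1) := if unlift ord0 s is Some j then e' j else e1.
  have -> : \big[mulmx/1%:M]_(j < r) Abar beta p r j k ^+ e' j =
            \big[mulmx/1%:M]_(j < r) Abar beta p r j k ^+ Ef (lift ord0 j).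
    by apply: eq_bigr => j _; rewrite /Ef liftK.
  have -> : e1 = Ef ord0 by rewrite /Ef unlift_none.
  rewrite EQ.
  exists ((c1 * c) *: \big[mulmx/1%:M]_(s' < r.+1) Abar beta p r.+1 s' n ^+ Ef s'),
    (tens_id (p ^ r.+1) n h''); split => //.
    by exists (c1 * c), Ef; split => //; rewrite mulf_neq0.
  by exists h''.
- move=> [D [Th [[c [e [cn ->]]] [h'' Hh'' ->] hZ]]].
  have := EQ 1 c e; rewrite mul1r => EQe; rewrite -EQe -tens_rp in hZ.
  set D1 := 1 *: Abar beta p 1 0 n ^+ e ord0 in hZ.
  set D' := c *: \big[mulmx/1%:M]_(j < r) Abar beta p r j k ^+ e (lift ord0 j) in hZ.
  have DD1 : Dr beta p 1 D1.
    exists 1, (fun _ => e ord0); split; first exact: oner_neq0.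
    by rewrite /D1 big_ord_recl big_ord0 mulmx1.
  pose h := invmx g' *m (D' *m tens_id (p ^ r) k h'') *m g'.
  have Hh : H h.
    apply/hH; rewrite /h !mulmxA mulmxV // mul1mx mulmxK //.
    exists D', (tens_id (p ^ r) k h''); split => //; last by exists h''.
    by exists c, (fun j => e (lift ord0 j)).
  have eZ : Z = D1 *m T h.
    have := congr1 (fun Y => T (invmx g') *m Y *m T g') hZ => /=.
    rewrite -invT !mulmxA mulVmx // mul1mx mulmxKV //.
    rewrite /Z => ->; rewrite invT (D1_comm _ DD1) /h !(tens_mul p0 nk) !mulmxA.
    by [].
  rewrite eZ; exists D1, (T h); split => //; by exists h.
Qed.

End Comp.


Lemma main (K : closedFieldType) p (beta : K) (pp : prime p) (pb : p.-primitive_root beta) :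
  forall n (E : 'M[K]_n -> Prop), pgl_elem_abelian p E -> (forall M, E M -> is_diag_mx M) ->
  (exists g A, [/\ pgl_centralizer E g, E A & g *m A <> A *m g]) ->
  exists r k, [/\ (0 < r)%N, n = (p ^ r * k)%N &
    exists H : 'M[K]_k -> Prop,
      [/\ pgl_elem_abelian p H, pgl_toral H & pgl_connected (pgl_centralizer H)] /\
      pgl_conj E (pgl_prod (@Dr K beta p r n) (@tens_group K k (p ^ r) n H))].
Proof.
have p0 : (0 < p)%N by exact: prime_gt0.
have p1 : (1 < p)%N by exact: prime_gt1.
elim/ltn_ind => n IH E Eab Ediag [g [A [Cg EA nc]]].
have [k [H [Q [nk uQ Hab Hdiag [Htor Heq]]]]] := peel_all pp pb Eab Ediag Cg EA nc.
case: (classic (pgl_connected (pgl_centralizer H))) => conn.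
  exists 1%N, k; split => //; first by rewrite expn1 mulnC.
  exists H; split => //; exists Q => // M; by rewrite expn1.
have [g' [A' [Cg' EA' nc']]] := disconn_witness conn.
have k0 : (0 < k)%N.
  case: (posnP k) => // k00; exfalso; apply: nc'.
  apply/matrixP => i; have := ltn_ord i; rewrite {2}k00 //.
have kn : (k < n)%N by rewrite nk ltn_Pmulr.
have [r [k' [r0 kk [H' [[H'ab H'tor H'conn] [g'' ug'' hH]]]]]] :=
  IH k kn H Hab Hdiag (ex_intro _ g' (ex_intro _ A' (And3 Cg' EA' nc'))).
exists r.+1, k'; split => //.
  by rewrite nk kk expnSr mulnAC.
exists H'; split => //.
apply: (compose p0 pb nk (_ : k = (k' * p ^ r)%N) uQ ug'' Heq hH).
by rewrite kk mulnC.
Qed.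


Section Cj.
Variable K : fieldType.
Variable n : nat.
Implicit Types X Y h : 'M[K]_n.

Definition C h X := h *m X *m invmx h.

Lemma C_mul h X Y : h \in unitmx -> C h (X *m Y) = C h X *m C h Y.
Proof. by move=> uh; rewrite /C !mulmxA mulmxKV. Qed.

Lemma C_scalar h (c : K) : h \in unitmx -> C h c%:M = c%:M.
Proof. by move=> uh; rewrite /C scalar_mxC mulmxK. Qed.

Lemma C_scale h (c : K) X : C h (c *: X) = c *: C h X.
Proof. by rewrite /C -scalemxAr -scalemxAl. Qed.

Lemma C_pow h X e : h \in unitmx -> C h (X ^+ e) = C h X ^+ e.
Proof.
move=> uh; elim: e => [|e IH]; first by rewrite !expr0 -idmxE C_scalar.
by rewrite !exprS -!mulmxE C_mul // IH.
Qed.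

Lemma C_K h X : h \in unitmx -> C (invmx h) (C h X) = X.
Proof. by move=> uh; rewrite /C invmxK !mulmxA mulVmx // mul1mx mulmxKV. Qed.

Lemma C_Kr h X : h \in unitmx -> C h (C (invmx h) X) = X.
Proof. by move=> uh; rewrite /C invmxK !mulmxA mulmxV // mul1mx mulmxK. Qed.

Lemma C_comp h1 h2 X : h1 \in unitmx -> h2 \in unitmx -> C (h1 *m h2) X = C h1 (C h2 X).
Proof. by move=> u1 u2; rewrite /C invmxM // !mulmxA. Qed.

Lemma C_unit h X : h \in unitmx -> (C h X \in unitmx) = (X \in unitmx).
Proof. by move=> uh; rewrite /C !unitmx_mul unitmx_inv uh andbT. Qed.

Lemma C_inv h X : h \in unitmx -> X \in unitmx -> C h (invmx X) = invmx (C h X).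
Proof.
move=> uh uX; apply/esym/invmx_uniq; by rewrite -C_mul // mulmxV // C_scalar.
Qed.

Lemma conj_elem p (E : 'M[K]_n -> Prop) h : h \in unitmx -> pgl_elem_abelian p E ->
  pgl_elem_abelian p (fun M => E (C h M)).
Proof.
move=> uh [[EU Esc Emul Einv] [sl hsl] Ecom Epow].
have uhi : invmx h \in unitmx by rewrite unitmx_inv.
split.
- split.
  + by move=> M /EU; rewrite C_unit.
  + by move=> c nc; rewrite C_scalar //; apply: Esc.
  + by move=> M N EM EN; rewrite C_mul //; apply: Emul.
  + move=> M EM; have uM : M \in unitmx by rewrite -(C_unit _ uh) EU.
    by rewrite C_inv //; apply: Einv.
- exists (map (C (invmx h)) sl) => M EM.
  have [B Bin [c nc hc]] := hsl _ EM.
  exists (C (invmx h) B); first exact: map_f.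
  exists c => //; by rewrite -C_scale -hc C_K.
- move=> M N EM EN; have [c nc hc] := Ecom _ _ EM EN.
  exists c => //; rewrite -(C_K (M *m N) uh) C_mul // hc C_scale -C_mul //.
  by rewrite C_K.
- move=> M EM; have [c hc] := Epow _ EM.
  exists c; by rewrite -(C_K (M ^+ p) uh) C_pow // hc C_scalar.
Qed.

End Cj.

Unset Implicit Arguments.

Theorem theorem4p27 (K : closedFieldType) (p s t : nat) (beta : K) :
  prime p -> odd p -> p \notin [pchar K] ->
  coprime p t -> (1 <= s)%N -> (1 <= t)%N ->
  p.-primitive_root beta ->
  forall E : 'M[K]_(p ^ s * t) -> Prop,
    pgl_elem_abelian p E -> pgl_toral E ->
    ~ pgl_connected (pgl_centralizer E) ->
    exists r k : nat,
      [/\ (1 <= r <= s)%N, (p ^ s * t = p ^ r * k)%N &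
      exists H : 'M[K]_k -> Prop,
        (H = @pgl_trivial K k \/
         [/\ pgl_elem_abelian p H, pgl_toral H & pgl_connected (pgl_centralizer H)])
        /\ pgl_conj E (pgl_prod (@Dr K beta p r (p ^ s * t)%N)
                               (@tens_group K k (p ^ r)%N (p ^ s * t)%N H))].
Proof.
move=> pp _ _ cop _ _ pb E Eab [g0 ug0 Etor] nconn.
have ugi : invmx g0 \in unitmx by rewrite unitmx_inv.
pose E0 := fun M => E (C (invmx g0) M).
have E0ab : pgl_elem_abelian p E0 by exact: conj_elem.
have E0diag : forall M, E0 M -> is_diag_mx M.
  move=> M /Etor; by rewrite -/(C g0 _) C_Kr.
have wit : exists g A, [/\ pgl_centralizer E0 g, E0 A & g *m A <> A *m g].
  have [g [A [[ug Cg] EA ncg]]] := disconn_witness nconn.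
  exists (C g0 g), (C g0 A); split.
  - split; first by rewrite C_unit.
    move=> M EM; have [c nc hc] := Cg _ EM.
    exists c => //.
    have ug' : C g0 g \in unitmx by rewrite C_unit.
    rewrite -/(C (C g0 g) M) /C invmxM ?unitmx_mul ?ug0 ?ugi //.
    rewrite invmxM ?ug0 ?ug // invmxK.
    have -> : g0 *m g *m invmx g0 *m M *m (g0 *m (invmx g *m invmx g0)) =
              C g0 (C g (C (invmx g0) M)) by rewrite /C invmxK !mulmxA.
    by rewrite /C in hc; rewrite /C hc -/(C g0 _) C_scale -/(C g0 _) C_Kr.
  - by rewrite /E0 C_K.
  - rewrite -!C_mul // => h; apply: ncg; exact: (conj_inj ug0 h).
have [r [k [r0 nk [H [Hprops [G uG hG]]]]]] := main pp pb E0ab E0diag wit.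
exists r, k; split => //.
  rewrite r0 /=; have : (p ^ r %| p ^ s * t)%N by rewrite nk dvdn_mulr.
  rewrite Gauss_dvdl; last by apply: coprimeXl.
  by rewrite dvdn_Pexp2l // prime_gt1.
exists H; split; first by right.
exists (G *m g0); first by rewrite unitmx_mul uG ug0.
move=> M; rewrite -/(C (G *m g0) M) C_comp // -hG /E0 C_K //.
Qed.
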